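(* Let $n\ge2$ be an integer. The number of pairs of disjoint matrices in $\Sigma_{n^2}$ equals the number of pairs of disjoint matrices in $\Pi_n$.
   Context: $\Sigma_{n^2}$ is the set of all $n^2\times n^2$ permutation matrices (binary matrices with exactly one 1 in every row and every column) which, when partitioned into an $n\times n$ array of $n\times n$ blocks, have exactly one entry equal to 1 in each block; $A=[a_{ij}],B=[b_{ij}]\in\Sigma_{n^2}$ are disjoint if there are no $i,j$ with $a_{ij}=b_{ij}=1$. $\Pi_n$ is the set of all $n\times n$ matrices whose entries are ordered pairs $\langle a,b\rangle$ with $a,b\in\{1,\dots,n\}$ such that in every row the first components, read in order, form a permutation of $\{1,\dots,n\}$, and in every column the second components, read in order, form a permutation of $\{1,\dots,n\}$; $\pi'=[p'_{ij}],\pi''=[p''_{ij}]\in\Pi_n$ are disjoint if $p'_{ij}\ne p''_{ij}$ for all $i,j$. *)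

(* Defs.v *)
From mathcomp Require Import all_boot all_algebra.
Set Implicit Arguments. Unset Strict Implicit. Unset Printing Implicit Defensive.

Definition is_perm_mxb (m : nat) (A : 'M[bool]_m) : bool :=
  [forall i, #|[set j | A i j]| == 1] && [forall j, #|[set i | A i j]| == 1].

Definition in_Sigma (n : nat) (A : 'M[bool]_(n ^ 2)) : bool :=
  is_perm_mxb A &&
  [forall a : 'I_n, forall b : 'I_n,
     #|[set ij : 'I_(n ^ 2) * 'I_(n ^ 2) |
         [&& A ij.1 ij.2, ij.1 %/ n == a & ij.2 %/ n == b]]| == 1].

Definition disjoint_Sigma (n : nat) (A B : 'M[bool]_(n ^ 2)) : bool :=
  [forall i, forall j, ~~ (A i j && B i j)].

(* Pi_n: n x n matrices with entries ordered pairs in {0..n-1}^2 (shifted from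
   {1..n}); first components in each row form a permutation, second components
   in each column form a permutation. *)
Definition in_Pi (n : nat) (P : 'M[('I_n * 'I_n)%type]_n) : bool :=
  [forall i, injectiveb (fun j => (P i j).1)] &&
  [forall j, injectiveb (fun i => (P i j).2)].

Definition disjoint_Pi (n : nat) (P Q : 'M[('I_n * 'I_n)%type]_n) : bool :=
  [forall i, forall j, P i j != Q i j].

Definition Sigma_disjoint_pairs (n : nat) :=
  [set AB : 'M[bool]_(n ^ 2) * 'M[bool]_(n ^ 2) |
     [&& in_Sigma AB.1, in_Sigma AB.2 & disjoint_Sigma AB.1 AB.2]].

Definition Pi_disjoint_pairs (n : nat) :=
  [set PQ : 'M[('I_n * 'I_n)%type]_n * 'M[('I_n * 'I_n)%type]_n |
     [&& in_Pi PQ.1, in_Pi PQ.2 & disjoint_Pi PQ.1 PQ.2]].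

(* Main.v *)
Require Import Defs.
From mathcomp Require Import all_boot all_algebra.
From mathcomp Require Import zify.
Set Implicit Arguments. Unset Strict Implicit. Unset Printing Implicit Defensive.

Lemma npos_of n (i : 'I_(n ^ 2)) : 0 < n.
Proof. case: n i => [|n] [i Hi] //. Qed.

Lemma qo_lt n (i : 'I_(n ^ 2)) : i %/ n < n.
Proof. have np := npos_of i. by rewrite ltn_divLR // mulnn. Qed.

Lemma ro_lt n (i : 'I_(n ^ 2)) : i %% n < n.
Proof. exact: ltn_pmod (npos_of i). Qed.

Lemma comb_lt n (a r : 'I_n) : a * n + r < n ^ 2.
Proof. rewrite -mulnn. have := ltn_ord a; have := ltn_ord r. nia. Qed.

Definition qo n (i : 'I_(n ^ 2)) : 'I_n := Ordinal (qo_lt i).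
Definition ro n (i : 'I_(n ^ 2)) : 'I_n := Ordinal (ro_lt i).
Definition comb n (a r : 'I_n) : 'I_(n ^ 2) := Ordinal (comb_lt a r).

Lemma qo_comb n (a r : 'I_n) : qo (comb a r) = a.
Proof.
apply: val_inj => /=. have np : 0 < n by case: n a r => [[]|].
by rewrite divnMDl // divn_small ?addn0.
Qed.

Lemma ro_comb n (a r : 'I_n) : ro (comb a r) = r.
Proof. apply: val_inj => /=. by rewrite modnMDl modn_small. Qed.

Lemma comb_qr n (i : 'I_(n ^ 2)) : comb (qo i) (ro i) = i.
Proof. apply: val_inj => /=. by rewrite -divn_eq. Qed.

Lemma qr_inj n (i j : 'I_(n ^ 2)) : qo i = qo j -> ro i = ro j -> i = j.
Proof. by move=> h1 h2; rewrite -(comb_qr i) -(comb_qr j) h1 h2. Qed.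

Lemma divn_comb n (a r : 'I_n) : (comb a r : nat) %/ n = a.
Proof. exact: (congr1 val (qo_comb a r)). Qed.

Definition fPi n (P : 'M[('I_n * 'I_n)%type]_n) : 'M[bool]_(n ^ 2) :=
  \matrix_(i, j) (P (qo i) (qo j) == (ro i, ro j)).

Lemma fPiE n (P : 'M[('I_n * 'I_n)%type]_n) a r b c :
  fPi P (comb a r) (comb b c) = (P a b == (r, c)).
Proof. by rewrite mxE !qo_comb !ro_comb. Qed.

Lemma fPi_inj n : injective (@fPi n).
Proof.
move=> P Q e; apply/matrixP => a b.
have h := fPiE P a (P a b).1 b (P a b).2.
rewrite e fPiE -surjective_pairing eqxx in h.
by rewrite (eqP h).
Qed.

Lemma perm_row m (A : 'M[bool]_m) i j j' :
  is_perm_mxb A -> A i j -> A i j' -> j = j'.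
Proof.
case/andP => /forallP /(_ i) /cards1P [x hx] _ h1 h2.
have: j \in [set j | A i j] by rewrite inE.
have: j' \in [set j | A i j] by rewrite inE.
by rewrite hx !inE => /eqP -> /eqP ->.
Qed.

Lemma perm_col m (A : 'M[bool]_m) i i' j :
  is_perm_mxb A -> A i j -> A i' j -> i = i'.
Proof.
case/andP => _ /forallP /(_ j) /cards1P [x hx] h1 h2.
have: i \in [set i | A i j] by rewrite inE.
have: i' \in [set i | A i j] by rewrite inE.
by rewrite hx !inE => /eqP -> /eqP ->.
Qed.

Lemma disj_eq n (P Q : 'M[('I_n * 'I_n)%type]_n) :
  disjoint_Sigma (fPi P) (fPi Q) = disjoint_Pi P Q.
Proof.
apply/forallP/forallP.
- move=> H a; apply/forallP => b; apply/negP => /eqP e.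
  move: (H (comb a (P a b).1)) => /forallP /(_ (comb b (P a b).2)).
  by rewrite !fPiE -e -surjective_pairing eqxx.
- move=> H i; apply/forallP => j; rewrite !mxE; apply/negP => /andP [/eqP e1 /eqP e2].
  move: (H (qo i)) => /forallP /(_ (qo j)). by rewrite e1 e2 eqxx.
Qed.

Lemma fPi_Sigma n (P : 'M[('I_n * 'I_n)%type]_n) : in_Pi P -> in_Sigma (fPi P).
Proof.
case/andP => /forallP Hr /forallP Hc.
apply/andP; split; first (apply/andP; split).
- apply/forallP => i.
  have injf := injectiveP _ (Hr (qo i)).
  set b := invF injf (ro i).
  have hb : (P (qo i) b).1 = ro i := f_invF injf (ro i).
  apply/cards1P; exists (comb b (P (qo i) b).2); apply/setP => j.
  rewrite !inE mxE; apply/eqP/eqP.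
  + move=> e. have qj : qo j = b by apply: (injf); rewrite /= e hb.
    apply: qr_inj; rewrite ?qo_comb ?ro_comb //. by rewrite -qj e.
  + move=> ->; rewrite qo_comb ro_comb -hb; by case: (P (qo i) b).
- apply/forallP => j.
  have injf := injectiveP _ (Hc (qo j)).
  set a := invF injf (ro j).
  have ha : (P a (qo j)).2 = ro j := f_invF injf (ro j).
  apply/cards1P; exists (comb a (P a (qo j)).1); apply/setP => i.
  rewrite !inE mxE; apply/eqP/eqP.
  + move=> e. have qi : qo i = a by apply: (injf); rewrite /= e ha.
    apply: qr_inj; rewrite ?qo_comb ?ro_comb //. by rewrite -qi e.
  + move=> ->; rewrite qo_comb ro_comb -ha; by case: (P a (qo j)).
- apply/forallP => a; apply/forallP => b.
  apply/cards1P; exists (comb a (P a b).1, comb b (P a b).2).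
  apply/setP => -[i j]; rewrite !inE /=; apply/idP/idP.
  + case/and3P => h /eqP qa /eqP qb.
    have qi : qo i = a by apply: val_inj.
    have qj : qo j = b by apply: val_inj.
    rewrite mxE qi qj in h; move/eqP: h => h.
    rewrite xpair_eqE; apply/andP; split; apply/eqP; apply: qr_inj;
      by rewrite ?qo_comb ?ro_comb // h.
  + rewrite xpair_eqE => /andP [/eqP -> /eqP ->].
    by rewrite fPiE !divn_comb -surjective_pairing !eqxx.
Qed.

Lemma Sigma_fPi n (A : 'M[bool]_(n ^ 2)) :
  in_Sigma A -> exists P, in_Pi P /\ fPi P = A.
Proof.
case/andP => Hp /forallP Hb.
pose blk (a b : 'I_n) := [set ij : 'I_(n ^ 2) * 'I_(n ^ 2) |
         [&& A ij.1 ij.2, ij.1 %/ n == a & ij.2 %/ n == b]].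
pose e a b := odflt (comb a a, comb b b) [pick ij in blk a b].
have Eab : forall a b, blk a b = [set e a b].
  move=> a b; move: (Hb a) => /forallP /(_ b) /cards1P [x hx0].
  have hx : blk a b = [set x] := hx0.
  rewrite /e; case: pickP => [y|].
  - by rewrite hx inE => /eqP -> /=.
  - by move=> /(_ x); rewrite hx inE eqxx.
have ep : forall a b, [/\ A (e a b).1 (e a b).2, qo (e a b).1 = a & qo (e a b).2 = b].
  move=> a b; have : e a b \in blk a b by rewrite Eab set11.
  rewrite inE => /and3P [h /eqP q1 /eqP q2]; split => //; exact: val_inj.
exists (\matrix_(a < n, b < n) (ro (e a b).1, ro (e a b).2))%R; split.
- apply/andP; split; apply/forallP.
  + move=> a; apply/injectiveP => b b'; rewrite /= !mxE => h.
    have [A1 q11 q12] := ep a b; have [A2 q21 q22] := ep a b'.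
    have e1 : (e a b).1 = (e a b').1 by apply: qr_inj; rewrite ?q11 ?q21.
    rewrite e1 in A1.
    have e2 := perm_row Hp A1 A2.
    by rewrite -q12 -q22 e2.
  + move=> b; apply/injectiveP => a a'; rewrite /= !mxE => h.
    have [A1 q11 q12] := ep a b; have [A2 q21 q22] := ep a' b.
    have e2 : (e a b).2 = (e a' b).2 by apply: qr_inj; rewrite ?q12 ?q22.
    rewrite e2 in A1.
    have e1 := perm_col Hp A1 A2.
    by rewrite -q11 -q21 e1.
- apply/matrixP => i j; rewrite !mxE.
  have [Ae q1 q2] := ep (qo i) (qo j).
  apply/idP/idP.
  + rewrite xpair_eqE => /andP [/eqP r1 /eqP r2].
    have ei : (e (qo i) (qo j)).1 = i by apply: qr_inj.
    have ej : (e (qo i) (qo j)).2 = j by apply: qr_inj.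
    by move: Ae; rewrite ei ej.
  + move=> Aij.
    have : (i, j) \in blk (qo i) (qo j).
      rewrite inE; apply/and3P; split => //; exact: eqxx.
    by rewrite Eab inE => /eqP <-; rewrite eqxx.
Qed.

Theorem corollary3 (n : nat) (hn : 2 <= n) :
  #|Sigma_disjoint_pairs n| = #|Pi_disjoint_pairs n|.
Proof.
pose F := fun PQ : 'M[('I_n * 'I_n)%type]_n * 'M[('I_n * 'I_n)%type]_n =>
  (fPi PQ.1, fPi PQ.2).
have Finj : injective F.
  by move=> [P Q] [P' Q'] [/fPi_inj -> /fPi_inj ->].
rewrite -(card_imset (mem (Pi_disjoint_pairs n)) Finj).
apply: eq_card => -[A B]; rewrite inE /=; apply/idP/imsetP.
- case/and3P => sA sB dAB.
  have [P [hP eP]] := Sigma_fPi sA.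
  have [Q [hQ eQ]] := Sigma_fPi sB.
  exists (P, Q); last by rewrite /F eP eQ.
  by rewrite inE /= hP hQ -disj_eq eP eQ.
- case => -[P Q]; rewrite inE /= => /and3P [hP hQ d] [-> ->].
  by rewrite !fPi_Sigma // disj_eq d.
Qed.
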